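(* There exists a game $\mathcal G=(G,\Pi,T,s_0)$ and a collective strategy $\bar\tau_\Pi$ such that $$\inf_{\sigma_{\mathsf O}\ \text{memoryless}}\mathbb P_{(\bar\tau_\Pi,\sigma_{\mathsf O})}(\text{reach }T)\;>\;\sup_{\bar\sigma_\Pi\ \text{memoryless}}\ \inf_{\sigma_{\mathsf O}\ \text{memoryless}}\mathbb P_{(\bar\sigma_\Pi,\sigma_{\mathsf O})}(\text{reach }T),$$ i.e. against an opponent restricted to memoryless strategies, the team can achieve a strictly higher guaranteed probability of reaching the target with a strategy using memory than with any memoryless collective strategy.
   Context: A game structure is $G=(\Sigma,S,(A_p)_{p\in\Sigma},(\mathsf{Av}_p)_{p\in\Sigma},\delta)$ with players $\Sigma$, a finite set $S$ of states, finite action sets $A_p$, nonempty available-action sets $\mathsf{Av}_p(s)\subseteq A_p$, and a transition function $\delta$ mapping a state and an available action profile to a probability distribution on $S$. A game is $(G,\Pi,T,s_0)$ with team $\Pi\subseteq\Sigma$, absorbing target set $T\subseteq S$, initial state $s_0$; $\Sigma\setminus\Pi=\{\mathsf O\}$ (the opponent). A strategy for $p$ maps each history (nonempty finite sequence of states) ending in $s$ to a distribution over $\mathsf{Av}_p(s)$; memoryless means it depends only on the last state. A collective strategy is a tuple of strategies of the team players, who randomise independently (joint action probability is the product of the individual probabilities). A complete strategy profile induces a probability measure $\mathbb P$ on plays from $s_0$; ''reach $T$'' is the event that the play visits $T$. *)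

(* Defs.v *)
From HB Require Import structures.
From mathcomp Require Import all_boot all_order all_algebra.
From mathcomp Require Import boolp classical_sets reals.
Set Implicit Arguments. Unset Strict Implicit. Unset Printing Implicit Defensive.
Import Order.TTheory GRing.Theory Num.Theory.
Local Open Scope ring_scope.

Section Games.
Variable R : realType.

Definition isdist (X : finType) (d : {ffun X -> R}) : Prop :=
  (forall x, 0 <= d x) /\ \sum_(x : X) d x = 1.

(* A game (G, Pi, T, s0) with two-sided players: the team Pi is indexed by
   the finite type [team]; the single opponent O is separate, so that
   Sigma \ Pi = {O}.  All players draw actions from one finite type [act]
   (the union of the A_p); the available actions Av_p(s) select the actual
   action set of each player.  [opp] is the opponent's Av. *)
Record game := Game {
  team : finType;
  state : finType;
  act : finType;
  av_team : team -> state -> {set act};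
  av_opp : state -> {set act};
  delta : state -> {ffun team -> act} -> act -> {ffun state -> R};
  target : {set state};
  s0 : state
}.

Definition available_profile (g : game) (s : state g)
  (f : {ffun team g -> act g}) (b : act g) : bool :=
  [forall i, f i \in av_team i s] && (b \in av_opp s).

Definition wf_game (g : game) : Prop :=
  (forall (i : team g) (s : state g), (0 < #|av_team i s|)%N) /\
  (forall s : state g, (0 < #|av_opp s|)%N) /\
  (forall (s : state g) f b, available_profile s f b -> isdist (delta s f b)) /\
  (forall s f b s', s \in target g -> available_profile s f b ->
      s' \notin target g -> delta s f b s' = 0).

(* A strategy maps a history, given as the list of earlier states [h] together
   with its last state [s], to a distribution over actions. *)
Definition strat (g : game) := seq (state g) -> state g -> {ffun act g -> R}.

Definition valid_strat (g : game) (av : state g -> {set act g}) (sg : strat g) :=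
  forall h s, isdist (sg h s) /\ (forall a, a \notin av s -> sg h s a = 0).

Definition memoryless (g : game) (sg : strat g) : Prop :=
  forall h h' s, sg h s = sg h' s.

(* Collective strategy: one strategy per team player (independent randomisation). *)
Definition cstrat (g : game) := team g -> strat g.

Definition valid_cstrat (g : game) (tau : cstrat g) :=
  forall i, valid_strat (av_team i) (tau i).

Definition memoryless_c (g : game) (tau : cstrat g) := forall i, memoryless (tau i).

Definition trans (g : game) (tau : cstrat g) (sg : strat g)
    (h : seq (state g)) (s s' : state g) : R :=
  \sum_(f : {ffun team g -> act g}) \sum_(b : act g)
     (\prod_(i : team g) tau i h s (f i)) * sg h s b * delta s f b s'.

Fixpoint reach_within (g : game) (tau : cstrat g) (sg : strat g) (n : nat)
    (h : seq (state g)) (s : state g) : R :=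
  if s \in target g then 1 else
  match n with
  | 0 => 0
  | n'.+1 => \sum_(s' : state g) trans tau sg h s s' * reach_within tau sg n' (rcons h s) s'
  end.

(* P_{(tau, sigma)}(reach T) from s0: by continuity of the measure, the supremum
   (= limit of the nondecreasing sequence) of the probabilities of reaching T
   within n steps. *)
Definition reach_prob (g : game) (tau : cstrat g) (sg : strat g) : R :=
  sup (range (fun n => reach_within tau sg n [::] (s0 g))).

Definition inf_mless_opp (g : game) (tau : cstrat g) : R :=
  inf [set p | exists sg : strat g,
        [/\ valid_strat (fun s : state g => av_opp s) sg, memoryless sg & p = reach_prob tau sg]].

Definition sup_mless_team (g : game) : R :=
  sup [set p | exists tau : cstrat g,
        [/\ valid_cstrat tau, memoryless_c tau & p = inf_mless_opp tau]].

End Games.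

(* Main.v *)
Require Import Defs.
From mathcomp Require Import all_boot all_order all_algebra.
From mathcomp Require Import boolp classical_sets reals.
From mathcomp Require Import ring lra.
Set Implicit Arguments. Unset Strict Implicit. Unset Printing Implicit Defensive.
Import Order.TTheory GRing.Theory Num.Theory.
Local Open Scope ring_scope.

Section Gen.
Variable R : realType.
Variable g : game R.

Lemma sumP (tau : cstrat g) h s : valid_cstrat tau ->
  \sum_(f : {ffun team g -> act g}) \prod_i tau i h s (f i) = 1.
Proof.
move=> Ht; rewrite -(bigA_distr_bigA (fun i a => tau i h s a)) /=; apply: big1 => i _.
by have [[_ ->] _] := Ht i h s.
Qed.

Lemma trans_sum (tau : cstrat g) sg h s (r : state g -> R) :
  \sum_s' trans tau sg h s s' * r s' =
  \sum_(f : {ffun team g -> act g}) \sum_b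
     (\prod_i tau i h s (f i)) * sg h s b * (\sum_s' delta s f b s' * r s').
Proof.
rewrite /trans.
under eq_bigr do rewrite big_distrl /=.
rewrite exchange_big /=; apply: eq_bigr => f _.
under eq_bigr do rewrite big_distrl /=.
rewrite exchange_big /=; apply: eq_bigr => b _.
rewrite big_distrr /=; apply: eq_bigr => s' _.
by rewrite mulrA.
Qed.

Lemma step_const (tau : cstrat g) sg h s (r : state g -> R) c :
  valid_cstrat tau -> isdist (sg h s) ->
  (forall f b, \sum_s' delta s f b s' * r s' = c) ->
  \sum_s' trans tau sg h s s' * r s' = c.
Proof.
move=> Ht [_ Hs] Hc; rewrite trans_sum.
transitivity (\sum_(f : {ffun team g -> act g}) \sum_b (\prod_i tau i h s (f i)) * (sg h s b * c)).
  by apply: eq_bigr => f _; apply: eq_bigr => b _; rewrite Hc mulrA.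
under eq_bigr do rewrite -big_distrr /= -big_distrl /= Hs mul1r.
by rewrite -big_distrl /= sumP // mul1r.
Qed.

Lemma trans_ge0 (tau : cstrat g) av sg h s s' :
  (forall (s : state g) f b, isdist (delta s f b)) ->
  valid_cstrat tau -> valid_strat av sg -> 0 <= trans tau sg h s s'.
Proof.
move=> Hd Ht Hs; apply: sumr_ge0 => f _; apply: sumr_ge0 => b _.
apply: mulr_ge0; last by case: (Hd s f b) => ->.
apply: mulr_ge0; last by case: (Hs h s) => [[->]].
by apply: prodr_ge0 => i _; case: (Ht i h s) => [[->]].
Qed.

Lemma rw_bounds (tau : cstrat g) av sg :
  (forall (s : state g) f b, isdist (delta s f b)) ->
  valid_cstrat tau -> valid_strat av sg ->
  forall n h s, 0 <= reach_within tau sg n h s <= 1.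
Proof.
move=> Hd Ht Hs; elim=> [|n IH] h s /=.
  by case: ifP => _; rewrite ?lexx ?ler01.
case: ifP => _; first by rewrite ler01 lexx.
apply/andP; split.
  apply: sumr_ge0 => s' _; apply: mulr_ge0; first exact: trans_ge0 Hs.
  by case/andP: (IH (rcons h s) s').
apply: (@le_trans _ _ (\sum_s' trans tau sg h s s' * 1)).
  apply: ler_sum => s' _; apply: ler_wpM2l; first exact: trans_ge0 Hs.
  by case/andP: (IH (rcons h s) s').
rewrite (@step_const _ _ _ _ _ 1) //; first by case: (Hs h s).
by move=> f b; under eq_bigr do rewrite mulr1; case: (Hd s f b).
Qed.

Lemma rp_bounds (tau : cstrat g) av sg :
  (forall (s : state g) f b, isdist (delta s f b)) ->
  valid_cstrat tau -> valid_strat av sg ->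
  0 <= reach_prob tau sg <= 1.
Proof.
move=> Hd Ht Hs; have B := rw_bounds Hd Ht Hs.
apply/andP; split.
  apply: (@le_trans _ _ (reach_within tau sg 0 [::] (s0 g))); first by case/andP: (B 0%N [::] (s0 g)).
  apply: ub_le_sup; last by exists 0%N.
  by exists 1 => _ [n _ <-]; case/andP: (B n [::] (s0 g)).
apply: ge_sup; first by exists (reach_within tau sg 0 [::] (s0 g)); exists 0%N.
by move=> _ [n _ <-]; case/andP: (B n [::] (s0 g)).
Qed.

End Gen.

Section Spec.
Variable R : realType.

Definition S0 : 'I_5 := @Ordinal 5 0 isT.
Definition C1 : 'I_5 := @Ordinal 5 1 isT.
Definition S1 : 'I_5 := @Ordinal 5 2 isT.
Definition TT : 'I_5 := @Ordinal 5 3 isT.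
Definition LL : 'I_5 := @Ordinal 5 4 isT.

Definition pt (t : 'I_5) : {ffun 'I_5 -> R} := [ffun s => (s == t)%:R].
Definition win (f : {ffun bool -> bool}) (b : bool) := [forall i, f i == ~~ b].
Definition dl (s : 'I_5) (f : {ffun bool -> bool}) (b : bool) : {ffun 'I_5 -> R} :=
  match nat_of_ord s with
  | 0 => [ffun s' => (pt C1 s' + pt S1 s') / 2]
  | 1 => pt S1
  | 2 => pt (if win f b then TT else LL)
  | 3 => pt TT
  | _ => pt LL
  end.

Definition G : game R :=
  @Game R bool 'I_5 bool
    (fun _ _ => [set: bool]%SET) (fun _ => [set: bool]%SET) dl [set TT] S0.

Lemma sum_pt t (r : 'I_5 -> R) : \sum_s' pt t s' * r s' = r t.
Proof.
rewrite (bigD1 t) //= big1 ?addr0; first by rewrite ffunE eqxx mul1r.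
by move=> s' /negbTE Hs; rewrite ffunE Hs mul0r.
Qed.

Lemma pt_dist t : isdist (pt t).
Proof.
split; first by move=> s; rewrite ffunE ler0n.
by rewrite -(sum_pt t (fun _ => 1)); apply: eq_bigr => s _; rewrite mulr1.
Qed.

Lemma sum_half a b (r : 'I_5 -> R) :
  \sum_s' [ffun s' => (pt a s' + pt b s') / 2] s' * r s' = (r a + r b) / 2.
Proof.
under eq_bigr do rewrite ffunE mulrAC mulrDl.
by rewrite -big_distrl /= big_split /= !sum_pt.
Qed.

Lemma dl_dist s f b : isdist (dl s f b).
Proof.
case: s => [[|[|[|[|m]]]] Hm] /=; try exact: pt_dist.
split; first by move=> s; rewrite ffunE !ffunE divr_ge0 ?addr_ge0 ?ler0n.
have := sum_half C1 S1 (fun _ => 1).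
under eq_bigr do rewrite mulr1.
move=> ->; rewrite -mulr2n -mulr_natr mulfV //.
by rewrite mul1r pnatr_eq0.
Qed.


Lemma G_dist (s : state G) f b : isdist (delta s f b).
Proof. exact: dl_dist. Qed.

Lemma rw_T (tau : cstrat G) sg n h : reach_within tau sg n h TT = 1.
Proof. by case: n => [|n] /=; rewrite inE eqxx. Qed.

Lemma rw_L (tau : cstrat G) sg n h :
  valid_cstrat tau -> (forall h s, isdist (sg h s)) ->
  reach_within tau sg n h LL = 0.
Proof.
move=> Ht Hs; elim: n h => [|n IH] h /=; rewrite inE /=; first by [].
apply: (@step_const _ G) => // f b.
by rewrite /= sum_pt IH.
Qed.

Lemma prod_ind (f : {ffun bool -> bool}) a :
  \prod_i ((f i == a)%:R : R) = ([forall i, f i == a])%:R.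
Proof.
apply/esym; case: (boolP [forall i, f i == a]) => [/forallP H|].
  by rewrite big1 // => i _; rewrite H.
rewrite negb_forall => /existsP [i Hi].
by rewrite (bigD1 i) //= (negbTE Hi) mul0r.
Qed.

Lemma sum_ind (t : {ffun bool -> R}) a : \sum_x t x * (x == a)%:R = t a.
Proof.
rewrite (bigD1 a) //= eqxx mulr1 big1 ?addr0 // => x /negbTE ->.
by rewrite mulr0.
Qed.

Lemma step_S1 (tau : cstrat G) sg h (r : 'I_5 -> R) :
  valid_cstrat tau -> isdist (sg h S1) -> r LL = 0 ->
  \sum_s' trans tau sg h S1 s' * r s' =
  r TT * \sum_b sg h S1 b * \prod_i tau i h S1 (~~ b).
Proof.
move=> Ht Hs HL; rewrite trans_sum.
transitivity (\sum_(f : {ffun bool -> bool}) \sum_(b : bool)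
   r TT * (sg h S1 b * ((\prod_i tau i h S1 (f i)) * (win f b)%:R))).
  apply: eq_bigr => f _; apply: eq_bigr => b _.
  rewrite /= sum_pt; case: (win f b); rewrite ?HL /= ?mulr1 ?mulr0 ?mul0r; ring.
rewrite (@exchange_big R 0 +%R) /= big_distrr /=; apply: eq_bigr => b _.
rewrite -big_distrr /= -big_distrr /=; congr (_ * (_ * _)).
transitivity (\sum_(f : {ffun bool -> bool}) \prod_(i : bool) (tau i h S1 (f i) * (f i == ~~ b)%:R)).
  by apply: eq_bigr => f _; rewrite big_split /= prod_ind.
rewrite -(bigA_distr_bigA (fun (i : bool) (x : bool) => tau i h S1 x * (x == ~~ b)%:R)) /=.
by apply: eq_bigr => i _; rewrite sum_ind.
Qed.


Lemma rw_step (tau : cstrat G) sg n h (s : state G) : s \notin target G ->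
  reach_within tau sg n.+1 h s =
  \sum_s' trans tau sg h s s' * reach_within tau sg n (rcons h s) s'.
Proof. by move=> /negbTE H; rewrite /= H. Qed.

Lemma step_S0 (tau : cstrat G) sg h (r : 'I_5 -> R) :
  valid_cstrat tau -> isdist (sg h S0) ->
  \sum_s' trans tau sg h S0 s' * r s' = (r C1 + r S1) / 2.
Proof. by move=> Ht Hs; apply: (@step_const _ G) => // f b; apply: sum_half. Qed.

Lemma step_C1 (tau : cstrat G) sg h (r : 'I_5 -> R) :
  valid_cstrat tau -> isdist (sg h C1) ->
  \sum_s' trans tau sg h C1 s' * r s' = r S1.
Proof. by move=> Ht Hs; apply: (@step_const _ G) => // f b; apply: sum_pt. Qed.

Definition taum : cstrat G := fun i h s => [ffun a => (a == (C1 \in h))%:R].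

Lemma dirac_dist (c : bool) : isdist ([ffun a => (a == c)%:R] : {ffun bool -> R}).
Proof.
split; first by move=> a; rewrite ffunE ler0n.
by rewrite big_bool !ffunE; case: c => /=; rewrite ?addr0 ?add0r.
Qed.

Lemma taum_valid : valid_cstrat taum.
Proof. by move=> i h s; split; [exact: dirac_dist | move=> a; rewrite inE]. Qed.

Lemma valueA (sg : strat G) : valid_strat (fun s : state G => av_opp s) sg ->
  memoryless sg -> reach_within taum sg 3 [::] S0 = 1 / 2.
Proof.
move=> Hv Hm; have Hs h s : isdist (sg h s) by case: (Hv h s).
have Ht := taum_valid.
rewrite rw_step ?inE // step_S0 //.
rewrite (@rw_step _ _ _ _ C1); last by rewrite inE.
rewrite step_C1 //.
rewrite (@rw_step _ _ _ _ S1); last by rewrite inE.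
rewrite (@rw_step _ _ _ _ S1); last by rewrite inE.
rewrite !step_S1 //; try by rewrite /= inE.
2: by rewrite rw_L.
rewrite !rw_T !mul1r /taum !big_bool /= !ffunE /=.
rewrite (Hm _ [::]) (Hm (rcons [::] S0) [::]).
case: (Hs [::] S1); rewrite big_bool => _ /= H1.
rewrite !(mulr0, mulr1, mul0r, addr0, add0r); lra.
Qed.


Definition sgd (b0 : bool) : strat G := fun h s => [ffun a => (a == b0)%:R].

Lemma sgd_valid b0 : valid_strat (fun s : state G => av_opp s) (sgd b0).
Proof. by move=> h s; split; [exact: dirac_dist | move=> a; rewrite inE]. Qed.

Lemma sgd_ml b0 : memoryless (sgd b0).
Proof. by []. Qed.

Lemma I5_cases (s : 'I_5) : s = S0 \/ s = C1 \/ s = S1 \/ s = TT \/ s = LL.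
Proof.
case: s => [[|[|[|[|[|m]]]]] Hm].
- by left; apply: val_inj.
- by right; left; apply: val_inj.
- by right; right; left; apply: val_inj.
- by right; right; right; left; apply: val_inj.
- by right; right; right; right; apply: val_inj.
- by [].
Qed.

Lemma sum_ind2 (F : bool -> R) a : \sum_x (x == a)%:R * F x = F a.
Proof.
rewrite (bigD1 a) //= eqxx mul1r big1 ?addr0 // => x /negbTE ->.
by rewrite mul0r.
Qed.

Definition Vb (w : R) (s : 'I_5) : R :=
  match nat_of_ord s with 3 => 1 | 4 => 0 | _ => w end.

Lemma boundB (tau : cstrat G) b0 : valid_cstrat tau -> memoryless_c tau ->
  forall n h s, reach_within tau (sgd b0) n h s <= Vb (\prod_i tau i [::] S1 (~~ b0)) s.
Proof.
move=> Ht Hml; set w := \prod_i _.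
have w0 : 0 <= w by apply: prodr_ge0 => i _; case: (Ht i [::] S1) => [[->]].
have Hs h s : isdist (sgd b0 h s) by case: (sgd_valid b0 h s).
elim=> [|n IH] h s.
  by case: (I5_cases s) => [->|[->|[->|[->|->]]]]; rewrite /= ?inE /= ?lexx.
case: (I5_cases s) => [->|[->|[->|[->|->]]]].
- rewrite rw_step ?inE // step_S0 //.
  have := IH (rcons h S0) C1; have := IH (rcons h S0) S1; rewrite /Vb /= => H1 H2; lra.
- by rewrite rw_step ?inE // step_C1 //; apply: IH.
- rewrite rw_step ?inE // step_S1 //; last by rewrite rw_L.
  rewrite rw_T mul1r /sgd.
  under eq_bigr do rewrite ffunE.
  rewrite sum_ind2 /= /w.
  by under eq_bigr do rewrite (Hml _ h [::]).
- by rewrite rw_T.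
- by rewrite rw_L.
Qed.

Lemma aux4 (x x' y y' : R) : 0 <= x -> 0 <= x' -> 0 <= y -> 0 <= y' ->
  x + x' = 1 -> y + y' = 1 -> x * y <= 1/4 \/ x' * y' <= 1/4.
Proof.
move=> hx hx' hy hy' xs ys.
have ex : x' = 1 - x by rewrite -xs; ring.
have ey : y' = 1 - y by rewrite -ys; ring.
have hxx : x * x' <= 1/4.
  rewrite ex; have := sqr_ge0 (x - 1/2); nra.
have hyy : y * y' <= 1/4.
  rewrite ey; have := sqr_ge0 (y - 1/2); nra.
have hp : (x * y) * (x' * y') <= 1/16.
  have -> : (x * y) * (x' * y') = (x * x') * (y * y') by ring.
  apply: le_trans (ler_pM (mulr_ge0 hx hx') (mulr_ge0 hy hy') hxx hyy) _; lra.
have [h1|h1] := leP (x * y) (1/4); first by left.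
right; have hxy' : 0 <= x' * y' by apply: mulr_ge0.
nra.
Qed.

Lemma choose_b0 (tau : cstrat G) : valid_cstrat tau ->
  exists b0, \prod_i tau i [::] S1 (~~ b0) <= 1 / 4.
Proof.
move=> Ht.
have [[x0 xs] _] := Ht true [::] S1; have [[y0 ys] _] := Ht false [::] S1.
move: xs ys; rewrite !big_bool => /= xs ys.
case: (aux4 (x0 true) (x0 false) (y0 true) (y0 false) xs ys) => H.
  by exists false; rewrite big_bool.
by exists true; rewrite big_bool.
Qed.

End Spec.

Theorem theorem2 (R : realType) :
  exists (g : game R) (tau : cstrat g),
    [/\ wf_game g, valid_cstrat tau &
        inf_mless_opp tau > sup_mless_team g].
Proof.
exists (@G R), (@taum R); split; first split.
- by move=> i s; rewrite cardsT card_bool.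
- split; first by move=> s; rewrite cardsT card_bool.
  split; first by move=> s f b _; exact: dl_dist.
  move=> s f b s'; rewrite inE => /eqP -> _; rewrite inE => Hs' /=.
  by rewrite ffunE (negbTE Hs').
- exact: taum_valid.
have Hd := @G_dist R.
apply: (@le_lt_trans _ _ (1/4)).
  apply: ge_sup.
    pose tau0 : cstrat (@G R) := fun i h s => [ffun a => (a == false)%:R].
    exists (inf_mless_opp tau0); exists tau0; split => //.
    by move=> i h s; split; [exact: dirac_dist | move=> a; rewrite inE].
  move=> _ [tau [Hv Hml ->]].
  have [b0 Hb0] := choose_b0 Hv.
  apply: (@le_trans _ _ (reach_prob tau (@sgd R b0))).
    apply: ge_inf; last by exists (@sgd R b0); split => //; exact: sgd_valid.
    exists 0 => _ [sg [Hsg _ ->]].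
    by case/andP: (rp_bounds Hd Hv Hsg).
  apply: le_trans Hb0.
  apply: ge_sup; first by exists (reach_within tau (@sgd R b0) 0 [::] (s0 (@G R))); exists 0%N.
  move=> _ [n _ <-]; have := @boundB R tau b0 Hv Hml n [::] S0; rewrite /Vb /=.
  by apply.
have h12 : 1/4 < 1/2 :> R by lra.
apply: lt_le_trans h12 _.
apply: lb_le_inf.
  by exists (reach_prob (@taum R) (@sgd R false)); exists (@sgd R false); split => //; exact: sgd_valid.
move=> _ [sg [Hsg Hm ->]].
rewrite -(valueA Hsg Hm).
apply: ub_le_sup; last by exists 3%N.
exists 1 => _ [n _ <-].
by case/andP: (rw_bounds Hd (@taum_valid R) Hsg n [::] (s0 (@G R))).
Qed.
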